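(* Let $G$ be a graph with at most $n$ nodes, let $v$ be any node of $G$ and let $T$ be any trail. Then it can be verified, using only $\mathcal{V}^{2n-1}(v)$, whether $T$ is feasible from $v$ in $G$.
   Context: $G$ is a finite connected undirected graph with unlabeled nodes, where at each node of degree $d$ the incident edges have distinct port numbers $0,\dots,d-1$. Truncated views: $\mathcal{V}^0(v)$ is a single node; $\mathcal{V}^{l+1}(v)$ is the port-labeled rooted tree whose root has, for each neighbor $v_i$ of $v$, a child joined by an edge carrying the port number of $\{v,v_i\}$ at $v$ (root side) and at $v_i$ (child side), this child being the root of a copy of $\mathcal{V}^l(v_i)$. A trail is any finite sequence of non-negative integers. For a walk (not necessarily simple path) $R=(\{v_1,v_2\},\dots,\{v_{j-1},v_j\})$ in $G$, its trail is $(p_1,\dots,p_{2j-2})$ where $p_{2i-1}$ and $p_{2i}$ are the port numbers of $\{v_i,v_{i+1}\}$ at $v_i$ and at $v_{i+1}$. A trail $T$ is feasible from $v$ if there exists such a walk $R$ starting at $v_1=v$ whose trail equals $T$. *)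

(* Defs.v *)
From mathcomp Require Import all_boot.
Set Implicit Arguments. Unset Strict Implicit. Unset Printing Implicit Defensive.

Record port_graph (V : finType) := PortGraph {
  adj : rel V;
  adj_sym : symmetric adj;
  adj_irrefl : irreflexive adj;
  adj_connected : forall u w : V, connect adj u w;
  port : V -> V -> nat;                      (* port v u = port of {v,u} at v *)
  port_inj : forall v u w, adj v u -> adj v w -> port v u = port v w -> u = w;
  port_range : forall v u, adj v u -> port v u < #|[pred w | adj v w]|
}.

Section Views.
Variables (V : finType) (G : port_graph V).

Definition deg (v : V) : nat := #|[pred w | adj G v w]|.

Definition nbrs (v : V) : seq V :=
  sort (fun a b => port G v a <= port G v b) (enum [pred w | adj G v w]).
End Views.

(* The children of a node are listed in the order
   of the port number on the parent side of the connecting edge; since those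
   ports are exactly 0,...,d-1 (distinct), the i-th child is joined by the
   edge whose parent-side port is i; each child entry stores the port number
   on the child side together with the subtree rooted at the child. *)
Inductive vtree : Type := VNode of seq (nat * vtree).

Fixpoint view (V : finType) (G : port_graph V) (l : nat) (v : V) : vtree :=
  match l with
  | 0 => VNode [::]
  | l'.+1 => VNode [seq (port G u v, view G l' u) | u <- nbrs G v]
  end.

Definition trail := seq nat.

Fixpoint trail_of (V : finType) (G : port_graph V) (x : V) (s : seq V) : trail :=
  match s with
  | [::] => [::]
  | y :: s' => port G x y :: port G y x :: trail_of G y s'
  end.

Definition feasible (V : finType) (G : port_graph V) (T : trail) (v : V) : Prop :=
  exists s : seq V, path (adj G) v s /\ trail_of G v s = T.

(* Main.v *)
From Stdlib Require Import ClassicalEpsilon Classical.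
Require Import Defs.
From mathcomp Require Import all_boot zify.
Set Implicit Arguments. Unset Strict Implicit. Unset Printing Implicit Defensive.

Lemma nbrs_ports (V : finType) (G : port_graph V) (x : V) :
  map (port G x) (nbrs G x) = iota 0 (size (nbrs G x)).
Proof.
have Hmem : forall u, (u \in nbrs G x) = adj G x u.
  by move=> u; rewrite /nbrs mem_sort mem_enum.
have Hsz : size (nbrs G x) = #|[pred w | adj G x w]|.
  by rewrite /nbrs size_sort cardE.
have Hu : uniq (nbrs G x) by rewrite /nbrs sort_uniq enum_uniq.
have Hs : sorted leq (map (port G x) (nbrs G x)).
  rewrite sorted_map; apply: sort_sorted => a b /=; exact: leq_total.
have Hu2 : uniq (map (port G x) (nbrs G x)).
  rewrite map_inj_in_uniq // => a b; rewrite !Hmem => Ha Hb; exact: port_inj.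
apply: (irr_sorted_eq (leT := ltn)).
- exact: ltn_trans.
- exact: ltnn.
- by rewrite ltn_sorted_uniq_leq Hu2 Hs.
- by rewrite ltn_sorted_uniq_leq iota_uniq iota_sorted.
apply: (uniq_min_size Hu2 _ _).2.
- move=> p /mapP [u]; rewrite Hmem => Hu' ->.
  by rewrite mem_iota add0n Hsz; apply: port_range.
- by rewrite size_map size_iota.
Qed.

Definition eqvt (x y : vtree) : bool :=
  if excluded_middle_informative (x = y) then true else false.
Lemma eqvtP x y : reflect (x = y) (eqvt x y).
Proof. rewrite /eqvt; case: excluded_middle_informative => H; by constructor. Qed.

Lemma map_transfer (A B C : Type) (f : A -> B) (g : A -> C) (s t : seq A) :
  (forall x y, f x = f y -> g x = g y) -> map f s = map f t -> map g s = map g t.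
Proof.
move=> H; elim: s t => [|a s IH] [|b t] //= [Hab Hst].
by rewrite (H _ _ Hab) (IH _ Hst).
Qed.

Section Stab.
Variables (T : finType) (h : nat -> T -> vtree) (ch : T -> seq (nat * T)).
Hypothesis h0 : forall a b, h 0 a = h 0 b.
Hypothesis hS : forall l a, h l.+1 a = VNode (map (fun p => (p.1, h l p.2)) (ch a)).

Definition R l a b := h l a = h l b.
Definition stable l := forall a b, R l a b -> R l.+1 a b.

Lemma refine1 l a b : R l.+1 a b -> R l a b.
Proof.
elim: l a b => [|l IH] a b; first by move=> _; apply: h0.
rewrite /R !hS => -[E]; congr VNode; move: E; apply: map_transfer.
by move=> [p x] [q y] /= [-> /IH ->].
Qed.

Lemma refine l m a b : l <= m -> R m a b -> R l a b.
Proof.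
move=> /subnK <-; elim: (m - l) => [|k IH] //= H.
by apply: IH; apply: refine1; rewrite addSn in H.
Qed.

Lemma stableS l : stable l -> stable l.+1.
Proof.
move=> St a b; rewrite /R !hS => -[E]; congr VNode; move: E; apply: map_transfer.
by move=> [p x] [q y] /= [-> /St ->].
Qed.

Lemma stable_up k j a b : stable k -> k <= j -> R k a b -> R j a b.
Proof.
move=> Sk /subnK <-; elim: (j - k) => [|i IH] //= H.
rewrite addSn; have Si : stable (i + k).
  by elim: i {IH H} => // i IHi; apply: stableS.
by apply: Si; apply: IH.
Qed.

Definition C l a : {set T} := [set b | eqvt (h l a) (h l b)].
Definition P l : {set {set T}} := C l @: setT.

Lemma inC l a b : (b \in C l a) = eqvt (h l a) (h l b).
Proof. by rewrite inE. Qed.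

Definition phi l (S : {set T}) : {set T} := \bigcup_(x in S) C l x.

Lemma phiC l a : phi l (C l.+1 a) = C l a.
Proof.
apply/setP => y; apply/bigcupP/idP.
- move=> [x]; rewrite !inC => /eqvtP Hx /eqvtP Hy; apply/eqvtP.
  by rewrite (refine1 Hx).
- move=> Hy; exists a => //; rewrite inC; exact/eqvtP.
Qed.

Lemma P_eq l : P l = phi l @: P l.+1.
Proof.
rewrite /P -imset_comp; apply: eq_imset => a /=; by rewrite phiC.
Qed.

Lemma P_mono l : #|P l| <= #|P l.+1|.
Proof. rewrite P_eq; exact: leq_imset_card. Qed.

Lemma P_eq_stable l : #|P l| = #|P l.+1| -> stable l.
Proof.
rewrite P_eq => /eqP /imset_injP Hinj a b Hab.
have E : C l.+1 a = C l.+1 b.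
  apply: Hinj; rewrite ?imset_f ?inE // !phiC.
  apply/setP => y; rewrite !inC; apply/eqvtP/eqvtP => <-; by rewrite Hab.
have : b \in C l.+1 a by rewrite E inC; exact/eqvtP.
by rewrite inC => /eqvtP.
Qed.

Lemma P_le l : #|P l| <= #|T|.
Proof. rewrite /P; apply: leq_trans (leq_imset_card _ _) _; exact: max_card. Qed.

Lemma P0 (t0 : T) : 0 < #|P 0|.
Proof. apply/card_gt0P; exists (C 0 t0); exact: imset_f. Qed.

Lemma exists_stable (t0 : T) : exists k, k < #|T| /\ stable k.
Proof.
apply: NNPP => Hn.
have H : forall k, k <= #|T| -> k < #|P k|.
  elim => [|k IH] Hk; first exact: (P0 t0).
  have IH' := IH (ltnW Hk).
  have : #|P k| != #|P k.+1|.
    apply/eqP => E; apply: Hn; exists k; split => //; exact: P_eq_stable.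
  rewrite neq_ltn => /orP [Hlt|Hlt]; first exact: leq_trans Hlt.
  by move: (P_mono k); rewrite leqNgt Hlt.
by have := H _ (leqnn _); rewrite ltnNge P_le.
Qed.

Lemma all_levels (t0 : T) m a b : #|T| <= m.+1 -> R m a b -> forall l, R l a b.
Proof.
move=> Hm Hab l.
have [k [Hk Sk]] := exists_stable t0.
have Hkm : k <= m by rewrite -ltnS (leq_trans Hk).
case: (leqP l m) => Hl; first exact: refine Hl Hab.
apply: (stable_up Sk); last exact: refine Hkm Hab.
by apply: leq_trans Hkm (ltnW Hl).
Qed.
End Stab.

Lemma port_nth (V : finType) (G : port_graph V) x x0 i :
  i < size (nbrs G x) -> port G x (nth x0 (nbrs G x) i) = i.
Proof.
move=> Hi; have := congr1 (fun s => nth 0 s i) (nbrs_ports G x) => /=.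
by rewrite (nth_map x0) // nth_iota.
Qed.

Lemma transfer (V W : finType) (G : port_graph V) (H : port_graph W) s :
  forall v w, (forall l, view G l v = view H l w) ->
  path (adj G) v s -> exists s', path (adj H) w s' /\ trail_of H w s' = trail_of G v s.
Proof.
elim: s => [|y s IH] v w E /=; first by move=> _; exists [::].
move=> /andP [Hvy Hp].
have Hy : y \in nbrs G v by rewrite /nbrs mem_sort mem_enum.
set i := index y (nbrs G v).
have Hi : i < size (nbrs G v) by rewrite index_mem.
have Hyi : nth y (nbrs G v) i = y by rewrite nth_index.
have Epv : port G v y = i by rewrite -{1}Hyi port_nth.
have El : forall l, [seq (port G u v, view G l u) | u <- nbrs G v] =
                    [seq (port H u w, view H l u) | u <- nbrs H w].
  by move=> l; have := E l.+1 => /= -[].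
have Hsz : size (nbrs G v) = size (nbrs H w).
  by have := congr1 size (El 0); rewrite !size_map.
set y' := nth w (nbrs H w) i.
have Hi' : i < size (nbrs H w) by rewrite -Hsz.
have Ey : forall l, (port G y v, view G l y) = (port H y' w, view H l y').
  move=> l; have := congr1 (fun s => nth (0, VNode [::]) s i) (El l).
  by rewrite /= (nth_map y) // (nth_map w) // Hyi.
have [s' [Hp' Et']] := IH y y' (fun l => congr1 snd (Ey l)) Hp.
exists (y' :: s'); split.
- rewrite /= Hp' andbT.
  have : y' \in nbrs H w by rewrite mem_nth.
  by rewrite /nbrs mem_sort mem_enum.
- by rewrite /= Et' Epv port_nth // (congr1 fst (Ey 0) : port G y v = port H y' w).
Qed.

Lemma views_all (V W : finType) (G : port_graph V) (H : port_graph W) n v w :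
  #|V| <= n -> #|W| <= n -> view G (2 * n - 1) v = view H (2 * n - 1) w ->
  forall l, view G l v = view H l w.
Proof.
move=> HV HW E l.
pose h l (a : (V + W)%type) := match a with inl x => view G l x | inr y => view H l y end.
pose ch (a : (V + W)%type) : seq (nat * (V + W)) := match a with
  | inl x => [seq (port G u x, inl u) | u <- nbrs G x]
  | inr y => [seq (port H u y, inr u) | u <- nbrs H y] end.
have h0 : forall a b, h 0 a = h 0 b by case=> ? [] ?.
have hS : forall l a, h l.+1 a = VNode (map (fun p => (p.1, h l p.2)) (ch a)).
  by move=> k [x|y] /=; rewrite -map_comp.
have := @all_levels _ h ch h0 hS (inl v) (2 * n - 1) (inl v) (inr w).
apply => //.
have Hn : 0 < n by apply: leq_trans HV; apply/card_gt0P; exists v.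
rewrite card_sum; lia.
Qed.

Theorem corollary5p3 (n : nat) :
  exists f : vtree -> trail -> bool,
    forall (V : finType) (G : port_graph V), #|V| <= n ->
    forall (v : V) (T : trail),
      feasible G T v <-> f (view G (2 * n - 1) v) T.
Proof.
exists (fun t T => if excluded_middle_informative
   (exists (W : finType) (H : port_graph W) (w : W),
      #|W| <= n /\ view H (2 * n - 1) w = t /\ feasible H T w) then true else false).
move=> V G HV v T; case: excluded_middle_informative => Hx; split => // Hf.
- have [W [H [w [HW [E [s [Hp Ht]]]]]]] := Hx.
  have Eall := views_all HW HV E.
  have [s' [Hp' Ht']] := transfer Eall Hp.
  by exists s'; rewrite Ht' Ht.
- by exfalso; apply: Hx; exists V, G, v.
Qed.
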